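(* Let $S \subseteq \mathbb{R}^n$ be nonempty, closed and convex, let $F = (F_1,\dots,F_m)^\top \colon S \to \mathbb{R}^m$ with each $F_i$ continuous and convex, and let $\ell > 0$. Define \[ u_\ell(x) := \max_{y \in S} \min_{i = 1,\dots,m} \left\{F_i(x) - F_i(y) - \frac{\ell}{2}\|x - y\|^2\right\}, \qquad U_\ell(x) := \operatorname*{argmax}_{y \in S} \min_{i = 1,\dots,m} \left\{F_i(x) - F_i(y) - \frac{\ell}{2}\|x - y\|^2\right\} \] for $x \in S$ (the maximizer is unique, so $U_\ell \colon S \to S$). Then $u_\ell$ and $U_\ell$ are continuous on $S$.
   Context: $\|\cdot\|$ is the Euclidean norm. *)

(* Defs.v *)
From HB Require Import structures.
From mathcomp Require Import all_boot all_order all_algebra.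
From mathcomp Require Import all_classical all_reals all_analysis.
Set Implicit Arguments. Unset Strict Implicit. Unset Printing Implicit Defensive.
Import Order.TTheory GRing.Theory Num.Theory.
Import numFieldNormedType.Exports.
Local Open Scope classical_set_scope.
Local Open Scope ring_scope.

(* Euclidean norm on R^n, represented as row vectors 'rV[R]_n
   (the default library norm on matrices is the max-norm, so we define it). *)
Definition enorm (R : realType) (n : nat) (x : 'rV[R]_n) : R :=
  Num.sqrt (\sum_(j < n) x ord0 j ^+ 2).

(* The objective  min_{i} { F_i(x) - F_i(y) - (l/2) ||x - y||^2 },
   with the m (>= 1) components indexed by 'I_m.+1 (i.e. m.+1 components). *)
Definition phi (R : realType) (n m : nat) (F : 'I_m.+1 -> 'rV[R]_n -> R)
  (l : R) (x y : 'rV[R]_n) : R :=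
  \big[Num.min/(F ord0 x - F ord0 y - l / 2 * enorm (x - y) ^+ 2)]_(i < m.+1)
     (F i x - F i y - l / 2 * enorm (x - y) ^+ 2).

Definition is_maximizer (R : realType) (n m : nat) (S : set 'rV[R]_n)
  (F : 'I_m.+1 -> 'rV[R]_n -> R) (l : R) (x y : 'rV[R]_n) : Prop :=
  S y /\ forall z, S z -> phi F l x z <= phi F l x y.

(* u_l(x) := max_{y in S} phi(x, y), written as the supremum (equal to the max
   when the max is attained). *)
Definition u_l (R : realType) (n m : nat) (S : set 'rV[R]_n)
  (F : 'I_m.+1 -> 'rV[R]_n -> R) (l : R) (x : 'rV[R]_n) : R :=
  sup [set phi F l x y | y in S].

(* U_l(x) := argmax_{y in S} phi(x, y): a (chosen) maximizer if one exists,
   otherwise x itself (irrelevant, since the theorem asserts existence and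
   uniqueness of the maximizer for every x in S). *)
Definition U_l (R : realType) (n m : nat) (S : set 'rV[R]_n)
  (F : 'I_m.+1 -> 'rV[R]_n -> R) (l : R) (x : 'rV[R]_n) : 'rV[R]_n :=
  match pselect (exists y, is_maximizer S F l x y) with
  | left h => projT1 (cid h)
  | right _ => x
  end.

(* Main.v *)
Require Import Defs.
From HB Require Import structures.
From mathcomp Require Import all_boot all_order all_algebra.
From mathcomp Require Import all_classical all_reals all_analysis.
Import Order.TTheory GRing.Theory Num.Theory.
Import numFieldNormedType.Exports.
Local Open Scope classical_set_scope.
Local Open Scope ring_scope.
From mathcomp Require Import ring lra.
Set Implicit Arguments. Unset Strict Implicit. Unset Printing Implicit Defensive.
Section Aux.
Variable R : realType.

Lemma bm_le k (f : 'I_k.+1 -> R) i :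
  \big[Num.min/f ord0]_(j < k.+1) f j <= f i.
Proof. exact: bigmin_le. Qed.

Lemma bm_ge k (f : 'I_k.+1 -> R) r : (forall i, r <= f i) ->
  r <= \big[Num.min/f ord0]_(j < k.+1) f j.
Proof. by move=> h; apply: le_bigmin => // i _. Qed.

Variable n : nat.
Notation V := 'rV[R]_n.

Definition dd (x y : V) : R := \sum_(j < n) (x ord0 j - y ord0 j) ^+ 2.

Lemma dd_ge0 (x y : V) : 0 <= dd x y.
Proof. by apply: sumr_ge0 => j _; rewrite sqr_ge0. Qed.

Lemma dd_sym (x y : V) : dd x y = dd y x.
Proof. by apply: eq_bigr => j _; rewrite -sqrrN opprB. Qed.

Lemma dd_entry (x y : V) j : (x ord0 j - y ord0 j) ^+ 2 <= dd x y.
Proof.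
rewrite /dd (bigD1 j) //= lerDl; apply: sumr_ge0 => i _; exact: sqr_ge0.
Qed.

Lemma dd_eq0 (x y : V) : dd x y = 0 -> x = y.
Proof.
move=> h; apply/rowP => j; apply/eqP; rewrite -subr_eq0 -sqrf_eq0.
by rewrite eq_le sqr_ge0 andbT -h dd_entry.
Qed.

Lemma enorm_dd (x y : V) : enorm (x - y) ^+ 2 = dd x y.
Proof.
rewrite /enorm sqr_sqrtr; last by apply: sumr_ge0 => j _; exact: sqr_ge0.
by apply: eq_bigr => j _; rewrite !mxE.
Qed.

Lemma entry_le_norm (v : V) j : `|v ord0 j| <= `|v|.
Proof.
rewrite [leRHS]/Num.Def.normr /= mx_normrE.
by apply/bigmax_geP; right => /=; exists (ord0, j).
Qed.

Lemma norm_lt_entries (v : V) e : 0 < e -> (forall j, `|v ord0 j| < e) -> `|v| < e.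
Proof.
move=> e0 h; rewrite [ltLHS]/Num.Def.normr /= mx_normrE.
apply: bigmax_lt => // -[i j] _ /=.
by rewrite (ord1 i); exact: h.
Qed.

End Aux.
Section Main.
Variable R : realType.
Variables n m : nat.
Notation V := 'rV[R]_n.
Variable S : set V.
Variable F : 'I_m.+1 -> V -> R.
Variable l : R.
Hypothesis hl : 0 < l.

Definition G (x y : V) : R :=
  \big[Num.min/(F ord0 x - F ord0 y)]_(i < m.+1) (F i x - F i y).
Definition eF (x y : V) : R := \sum_(i < m.+1) `|F i x - F i y|.

Lemma G_le (x y : V) i : G x y <= F i x - F i y.
Proof. rewrite /G; exact: (bm_le (fun i => F i x - F i y)). Qed.

Lemma G_ge (x y : V) r : (forall i, r <= F i x - F i y) -> r <= G x y.
Proof. rewrite /G; exact: (@bm_ge _ _ (fun i => F i x - F i y)). Qed.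

Lemma phiE (x y : V) : phi F l x y = G x y - l / 2 * dd x y.
Proof.
rewrite /phi enorm_dd; apply/eqP; rewrite eq_le; apply/andP; split.
- rewrite lerBrDr; apply: G_ge => i; rewrite -lerBrDr.
  exact: (bm_le (fun i => F i x - F i y - l / 2 * dd x y)).
- apply: (bm_ge (f := fun i => F i x - F i y - l / 2 * dd x y)) => i.
  by rewrite lerD2r G_le.
Qed.

Lemma eF_ge (x y : V) i : `|F i x - F i y| <= eF x y.
Proof.
rewrite /eF (bigD1 i) //= lerDl; apply: sumr_ge0 => j _; exact: normr_ge0.
Qed.

Lemma eF_ge0 (x y : V) : 0 <= eF x y.
Proof. by apply: sumr_ge0 => j _; exact: normr_ge0. Qed.

Lemma eF_sym (x y : V) : eF x y = eF y x.
Proof. by apply: eq_bigr => j _; rewrite distrC. Qed.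

Lemma G_lip1 (x y x' y' : V) : G x' y' - (eF x x' + eF y y') <= G x y.
Proof.
apply: G_ge => i.
have h1 := eF_ge x x' i; have h2 := eF_ge y y' i; have h3 := G_le x' y' i.
have h4 := ler_norm (F i x' - F i x); rewrite distrC in h4.
have h5 := ler_norm (F i y - F i y').
lra.
Qed.

Lemma G_lip (x y x' y' : V) : `|G x y - G x' y'| <= eF x x' + eF y y'.
Proof.
rewrite ler_norml; have := G_lip1 x y x' y'; have := G_lip1 x' y' x y.
rewrite (eF_sym x') (eF_sym y'); lra.
Qed.

Local Open Scope convex_scope.
Hypothesis hScv : convex_set (S : set (convex_lmodType 'rV[R]_n)).
Hypothesis hFcv : forall i, convex_function (S : set (convex_lmodType 'rV[R]_n)) (F i).

Lemma conv_mx (t : {i01 R}) (y z : V) :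
  (y : convex_lmodType V) <| t |> z = t%:num *: y + (1 - t%:num) *: z.
Proof. by []. Qed.

Lemma S_conv (t : {i01 R}) (y z : V) : S y -> S z -> S (t%:num *: y + (1 - t%:num) *: z).
Proof.
move=> Sy Sz; rewrite -conv_mx; apply: set_mem; apply: hScv; exact: mem_set.
Qed.

Lemma F_conv i (t : {i01 R}) (y z : V) : S y -> S z ->
  F i (t%:num *: y + (1 - t%:num) *: z) <= t%:num * F i y + (1 - t%:num) * F i z.
Proof.
move=> Sy Sz; rewrite -conv_mx; have := hFcv i t (mem_set Sy) (mem_set Sz).
by [].
Qed.

Lemma G_concave (x y z : V) (t : {i01 R}) : S y -> S z ->
  t%:num * G x y + (1 - t%:num) * G x z <= G x (t%:num *: y + (1 - t%:num) *: z).
Proof.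
move=> Sy Sz; apply: G_ge => i.
have h1 := F_conv i t Sy Sz.
have t0 : 0 <= t%:num by [].
have t1 : t%:num <= 1 by [].
have h2 : t%:num * G x y <= t%:num * (F i x - F i y) by rewrite ler_wpM2l // G_le.
have h3 : (1 - t%:num) * G x z <= (1 - t%:num) * (F i x - F i z).
  by rewrite ler_wpM2l ?subr_ge0 // G_le.
lra.
Qed.

Lemma dd_conv (x y z : V) (t : R) :
  dd x (t *: y + (1 - t) *: z) = t * dd x y + (1 - t) * dd x z - t * (1 - t) * dd y z.
Proof.
rewrite /dd !mulr_sumr -big_split -sumrB /=; apply: eq_bigr => j _; rewrite !mxE.
ring.
Qed.

Lemma max_strong (x c y : V) : is_maximizer S F l x c -> S y ->
  phi F l x y <= phi F l x c - l / 4 * dd y c.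
Proof.
move=> [Sc hc] Sy.
have h0 : (0 : R) <= 1 / 2 by [].
have h1 : (1 / 2 : R) <= 1 by rewrite ler_pdivrMr // mul1r ler1n.
pose t := Itv01 h0 h1.
have := hc _ (S_conv t Sy Sc).
have := G_concave x t Sy Sc.
rewrite !phiE dd_conv /=.
have hd := dd_ge0 y c.
lra.
Qed.

Lemma maximizer_unique (x c c' : V) : is_maximizer S F l x c -> is_maximizer S F l x c' -> c = c'.
Proof.
move=> hc hc'.
have h1 := max_strong hc (proj1 hc').
have h2 := max_strong hc' (proj1 hc).
rewrite dd_sym in h2.
have hd := dd_ge0 c' c.
apply: esym; apply: dd_eq0.
have : l / 4 * dd c' c <= 0 by lra.
have l4 : 0 < l / 4 by rewrite divr_gt0.
rewrite pmulr_rle0 // => hle; by apply/eqP; rewrite eq_le hle hd.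
Qed.
Hypothesis hSc : closed S.
Hypothesis hFc : forall i, {within S, continuous (F i)}.

Lemma within_eps (f : V -> R) (x : V) : {within S, continuous f} -> S x ->
  forall e, 0 < e -> exists2 d, 0 < d & forall y, S y -> `|x - y| < d -> `|f x - f y| < e.
Proof.
move=> /subspace_continuousP /(_ x) fc Sx e e0.
have /cvgrPdist_lt /(_ e e0) := fc Sx.
rewrite near_withinE => /nbhs_ballP [d d0 hd].
exists d => // y Sy xy; apply: hd => //.
by rewrite -ball_normE.
Qed.

Lemma squeeze {T : Type} (FF : set_system T) {FFF : Filter FF} (f g : T -> R) (a : R) :
  (\forall t \near FF, `|f t - a| <= g t) -> g @ FF --> 0 -> f @ FF --> a.
Proof.
move=> hb /cvgrPdist_lt hg; apply/cvgrPdist_lt => e e0.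
have := hg e e0; apply: filterS2 hb => t h1 h2.
rewrite distrC (le_lt_trans h1) //.
by rewrite sub0r normrN in h2; exact: le_lt_trans (ler_norm _) h2.
Qed.

Lemma cvg_entry {T : Type} (FF : set_system T) {FFF : Filter FF} (g : T -> V) (a : V) j :
  g @ FF --> a -> (fun t => g t ord0 j) @ FF --> a ord0 j.
Proof.
move=> /cvgrPdist_lt hg; apply/cvgrPdist_lt => e e0.
apply: filterS (hg e e0) => t h.
have := entry_le_norm (a - g t) j; rewrite !mxE => h'.
exact: le_lt_trans h' h.
Qed.

Lemma cvg_dd {T : Type} (FF : set_system T) {FFF : Filter FF} (g1 g2 : T -> V) (a b : V) :
  g1 @ FF --> a -> g2 @ FF --> b -> (fun t => dd (g1 t) (g2 t)) @ FF --> dd a b.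
Proof.
move=> h1 h2; rewrite /dd.
apply: cvg_big => [|j _]; first exact: add_continuous.
rewrite expr2; apply: cvgM; apply: cvgB; exact: cvg_entry.
Qed.

Lemma cvg_eF {T : Type} (FF : set_system T) {FFF : Filter FF} (g : T -> V) (b : V) :
  (forall i, (fun t => F i (g t)) @ FF --> F i b) -> (fun t => eF (g t) b) @ FF --> 0.
Proof.
move=> h; have -> : (0 : R) = \sum_(i < m.+1) `|F i b - F i b|.
  by rewrite big1 // => i _; rewrite subrr normr0.
rewrite /eF; apply: cvg_big => [|i _]; first exact: add_continuous.
apply: cvg_norm; apply: cvgB => //; exact: cvg_cst.
Qed.

Lemma cvg_F_comp {T : Type} (FF : set_system T) {FFF : Filter FF} (g : T -> V) (a : V) i :
  S a -> g @ FF --> a -> (\forall t \near FF, S (g t)) -> (fun t => F i (g t)) @ FF --> F i a.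
Proof.
move=> Sa ga gS.
have fc0 : {within S, continuous (F i)} by exact: hFc.
move/subspace_continuousP: fc0 => /(_ a Sa) fc.
have fc' : F i @ within S (nbhs a) --> F i a := fc.
apply: (cvg_comp g (F i) _ fc').
move=> P hP; have := ga _ hP; rewrite /= => hP'.
by apply: filterS2 hP' gS => t h1 h2; exact: h1.
Qed.

Lemma phi_cvg {T : Type} (FF : set_system T) {FFF : Filter FF} (g1 g2 : T -> V) (a b : V) :
  g1 @ FF --> a -> g2 @ FF --> b ->
  (forall i, (fun t => F i (g1 t)) @ FF --> F i a) ->
  (forall i, (fun t => F i (g2 t)) @ FF --> F i b) ->
  (fun t => phi F l (g1 t) (g2 t)) @ FF --> phi F l a b.
Proof.
move=> h1 h2 hF1 hF2.
apply: (@squeeze _ _ _ _ (fun t => eF (g1 t) a + eF (g2 t) b + l / 2 * `|dd (g1 t) (g2 t) - dd a b|)).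
  apply: nearW => t; rewrite !phiE.
  have := G_lip (g1 t) (g2 t) a b.
  set A := G _ _ - G _ _; set B := dd _ _ - dd _ _ => hA.
  have -> : G (g1 t) (g2 t) - l / 2 * dd (g1 t) (g2 t) - (G a b - l / 2 * dd a b)
           = A - l / 2 * B by rewrite /A /B; ring.
  apply: le_trans (ler_normB _ _) _; rewrite normrM (@ger0_norm _ (l / 2)); last first.
    by rewrite divr_ge0 // ltW.
  by rewrite lerD2r.
rewrite -[0]addr0; apply: cvgD; first rewrite -[0]addr0; first apply: cvgD.
- exact: cvg_eF.
- exact: cvg_eF.
rewrite -(mulr0 (l / 2)); apply: cvgM; first exact: cvg_cst.
have -> : (0:R) = `|dd a b - dd a b| by rewrite subrr normr0.
apply: cvg_norm; apply: cvgB; last exact: cvg_cst.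
exact: cvg_dd.
Qed.
Lemma norm_sq_le_dd (x y : V) : `|x - y| ^+ 2 <= dd x y.
Proof.
have h : `|x - y| <= Num.sqrt (dd x y).
  rewrite [leLHS]/Num.Def.normr /= mx_normrE; apply: bigmax_le => [|[i j] _ /=].
    exact: sqrtr_ge0.
  rewrite (ord1 i) !mxE -sqrtr_sqr; apply: ler_wsqrtr; exact: dd_entry.
have h0 : 0 <= `|x - y| by [].
have hs := sqr_sqrtr (dd_ge0 x y).
have hs0 := sqrtr_ge0 (dd x y).
nra.
Qed.

Lemma G_xx (x : V) : G x x = 0.
Proof.
apply/eqP; rewrite eq_le; apply/andP; split.
  by have := G_le x x ord0; rewrite subrr.
by apply: G_ge => i; rewrite subrr.
Qed.

Lemma dd_xx (x : V) : dd x x = 0.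
Proof. by rewrite /dd big1 // => j _; rewrite subrr expr0n. Qed.

Lemma phi_xx (x : V) : phi F l x x = 0.
Proof. by rewrite phiE G_xx dd_xx mulr0 subrr. Qed.

Lemma phix_cont (x : V) : {within S, continuous (phi F l x)}.
Proof.
apply/subspace_continuousP => y0 Sy0.
apply: (@phi_cvg _ _ _ (fun=> x) (fun t => t)).
- exact: cvg_cst.
- exact: cvg_within.
- move=> i; exact: cvg_cst.
- move=> i; apply: cvg_F_comp => //; first exact: cvg_within.
  exact: near_withinT.
Qed.

Lemma exists_max (x : V) : S x -> exists c, is_maximizer S F l x c.
Proof.
move=> Sx.
have [d d0 hd] := within_eps (@hFc ord0) Sx ltr01.
have b0 : 0 < l / 2 by rewrite divr_gt0.
pose r0 := Num.max d ((2 / d) / (l / 2)).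
have r0d : d <= r0 by rewrite le_max lexx.
have coer : forall y, S y -> r0 < `|x - y| -> phi F l x y < 0.
  move=> y Sy; rewrite gt_max => /andP [hrd hrab].
  set r := `|x - y| in hrd hrab *.
  have r0' : 0 < r by apply: lt_trans hrd.
  have t0 : 0 <= d / (2 * r) by rewrite divr_ge0 // ?mulr_ge0 // ltW.
  have t1 : d / (2 * r) <= 1.
    rewrite ler_pdivrMr ?mulr_gt0 // mul1r.
    have : 0 < r by []. move: hrd; lra.
  pose t := Itv01 t0 t1.
  have Sz := S_conv t Sy Sx.
  have Fz := F_conv ord0 t Sy Sx.
  rewrite /= in Sz Fz.
  set z := _ + _ in Sz Fz.
  have xz : x - z = (d / (2 * r)) *: (x - y).
    by apply/rowP => j; rewrite !mxE; ring.
  have nxz : `|x - z| < d.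
    rewrite xz normrZ ger0_norm // -/r.
    rewrite mulrAC -mulf_div divff ?gt_eqF // mulr1.
    rewrite gtr_pMr //. rewrite invf_lt1 //. by rewrite ltr1n.
  have := hd z Sz nxz => hF.
  have hF' := ler_norm (F ord0 x - F ord0 z).
  have ht : d / (2 * r) * (F ord0 x - F ord0 y) < 1 by lra.
  have key : d * (F ord0 x - F ord0 y) < 2 * r.
    have -> : d * (F ord0 x - F ord0 y) = (2 * r) * (d / (2 * r) * (F ord0 x - F ord0 y)).
      have r2 : 2 * r != 0 by rewrite gt_eqF // mulr_gt0.
      by rewrite mulrA mulrCA divff // mulr1.
    by rewrite -[X in _ < X]mulr1 ltr_pM2l ?mulr_gt0.
  have hab : 2 / d < l / 2 * r by move: hrab; rewrite ltr_pdivrMr // [r * _]mulrC.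
  have h2 : 2 < d * (l / 2 * r) by move: hab; rewrite ltr_pdivrMr // [_ * d]mulrC.
  have h3 : 2 * r < d * (l / 2 * r ^+ 2).
    have : 2 * r < d * (l / 2 * r) * r by rewrite ltr_pM2r.
    by rewrite expr2 !mulrA.
  have h4 : F ord0 x - F ord0 y < l / 2 * r ^+ 2.
    by rewrite -(ltr_pM2l d0); apply: lt_trans h3.
  have h5 := norm_sq_le_dd x y.
  have h6 : l / 2 * r ^+ 2 <= l / 2 * dd x y by rewrite ler_pM2l.
  rewrite phiE; have := G_le x y ord0; lra.
pose K := S `&` closed_ball_ Num.norm x r0.
have KS : K `<=` S by move=> y [].
have Kx : K x.
  split => //; rewrite /closed_ball_ /= subrr normr0.
  by apply: le_trans r0d; exact: ltW.
have cK : compact K.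
  apply: bounded_closed_compact; last first.
    by apply: closedI => //; exact: closed_closed_ball_.
  rewrite /= /bounded_near; near=> M => y [_] /=; rewrite /closed_ball_ /= => hy.
  have : `|y| <= `|x| + `|x - y|.
    by have := ler_normB x (x - y); rewrite opprB addrC subrK.
  move=> h; apply: le_trans h _.
  have : `|x| + r0 <= M by near: M; apply: nbhs_pinfty_ge; exact: num_real.
  by move=> h'; apply: le_trans h'; rewrite lerD2l.
have [c cKc hc] := compact_EVT_max (ex_intro _ x Kx) cK (continuous_subspaceW KS (@phix_cont x)).
rewrite inE in cKc.
exists c; split; first exact: KS.
move=> z Sz.
have [hz|hz] := leP `|x - z| r0.
  by apply: hc; rewrite inE; split.
apply: le_trans (ltW (coer z Sz hz)) _.
by rewrite -(phi_xx x); apply: hc; rewrite inE.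
Unshelve. all: by end_near.
Qed.
Lemma U_max (x : V) : S x -> is_maximizer S F l x (U_l S F l x).
Proof.
move=> Sx; rewrite /U_l; case: pselect => [h|h]; first exact: (projT2 (cid h)).
by exfalso; apply: h; exact: exists_max.
Qed.

Lemma u_eq (x : V) : S x -> u_l S F l x = phi F l x (U_l S F l x).
Proof.
move=> Sx; have [Sc hc] := U_max Sx.
have ub : ubound [set phi F l x y | y in S] (phi F l x (U_l S F l x)).
  by move=> _ [y Sy <-]; exact: hc.
have ne : [set phi F l x y | y in S] !=set0.
  by exists (phi F l x (U_l S F l x)), (U_l S F l x).
rewrite /u_l; apply/eqP; rewrite eq_le; apply/andP; split.
  exact: ge_sup.
apply: sup_upper_bound; first by split => //; exists (phi F l x (U_l S F l x)).
by exists (U_l S F l x).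
Qed.

Lemma eF_xx (x : V) : eF x x = 0.
Proof. by rewrite /eF big1 // => i _; rewrite subrr normr0. Qed.

Lemma dd_quad (x0 t y y0 : V) :
  dd x0 y + dd t y0 - dd x0 y0 - dd t y <= 2 * dd t x0 + dd y y0 / 2.
Proof.
rewrite -subr_ge0.
have -> : 2 * dd t x0 + dd y y0 / 2 - (dd x0 y + dd t y0 - dd x0 y0 - dd t y) =
  \sum_(j < n) (2 * (t ord0 j - x0 ord0 j) ^+ 2 + (y ord0 j - y0 ord0 j) ^+ 2 / 2
   - ((x0 ord0 j - y ord0 j) ^+ 2 + (t ord0 j - y0 ord0 j) ^+ 2
      - (x0 ord0 j - y0 ord0 j) ^+ 2 - (t ord0 j - y ord0 j) ^+ 2)).
  rewrite !(sumrB, big_split) /= -!mulr_sumr -!mulr_suml /dd; lra.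
apply: sumr_ge0 => j _.
set a := t ord0 j; set b := x0 ord0 j; set c := y ord0 j; set e := y0 ord0 j.
have -> : 2 * (a - b) ^+ 2 + (c - e) ^+ 2 / 2 - ((b - c) ^+ 2 + (a - e) ^+ 2 - (b - e) ^+ 2 - (a - c) ^+ 2)
  = 2 * ((a - b) - (c - e) / 2) ^+ 2 by field.
by rewrite mulr_ge0 // sqr_ge0.
Qed.

Lemma U_est (x0 t : V) : S x0 -> S t ->
  l / 4 * dd (U_l S F l t) (U_l S F l x0) <= 2 * eF t x0 + l * dd t x0.
Proof.
move=> Sx0 St.
set y := U_l S F l t; set y0 := U_l S F l x0.
have [Sy _] := U_max St; have [Sy0 _] := U_max Sx0.
have h1 := max_strong (U_max Sx0) Sy.
have h2 := max_strong (U_max St) Sy0.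
rewrite -/y -/y0 dd_sym in h2.
rewrite -/y -/y0 in h1.
rewrite !phiE in h1 h2.
have g1 := G_lip x0 y0 t y0; have g2 := G_lip t y x0 y.
rewrite !eF_xx !addr0 in g1 g2.
rewrite eF_sym in g1.
have g1' := ler_norm (G x0 y0 - G t y0).
have g2' := ler_norm (G t y - G x0 y).
have q := dd_quad x0 t y y0.
have q' : l / 2 * (dd x0 y + dd t y0 - dd x0 y0 - dd t y) <= l / 2 * (2 * dd t x0 + dd y y0 / 2).
  by rewrite ler_wpM2l // divr_ge0 // ltW.
lra.
Qed.

Lemma U_cvg (x0 : V) : S x0 -> U_l S F l @ within S (nbhs x0) --> U_l S F l x0.
Proof.
move=> Sx0.
set g := fun t => 8 / l * eF t x0 + 4 * dd t x0.
have gc : g @ within S (nbhs x0) --> 0.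
  rewrite -[0](addr0 0); apply: cvgD.
    rewrite -(mulr0 (8 / l)); apply: cvgM; first exact: cvg_cst.
    apply: cvg_eF => i; apply: cvg_F_comp => //; first exact: cvg_within.
    exact: near_withinT.
  rewrite -(mulr0 4) -(dd_xx x0); apply: cvgM; first exact: cvg_cst.
  apply: cvg_dd; first exact: cvg_within.
  exact: cvg_cst.
apply/cvgrPdist_lt => e e0.
move/cvgrPdist_lt: gc => /(_ (e ^+ 2) (exprn_gt0 2 e0)) hgn.
have hS : \forall t \near within S (nbhs x0), S t by exact: near_withinT.
apply: filterS2 hS hgn => t St.
rewrite sub0r normrN => hg.
have hg' := le_lt_trans (ler_norm _) hg.
have est := U_est Sx0 St.
have hn := norm_sq_le_dd (U_l S F l x0) (U_l S F l t).
rewrite dd_sym in hn.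
have l4 : 0 < l / 4 by rewrite divr_gt0.
have : dd (U_l S F l t) (U_l S F l x0) <= g t.
  rewrite /g -(ler_pM2l l4).
  have -> : l / 4 * (8 / l * eF t x0 + 4 * dd t x0) = 2 * eF t x0 + l * dd t x0.
    by field; rewrite gt_eqF.
  exact: est.
move=> hd.
have hn0 : 0 <= `|U_l S F l x0 - U_l S F l t| by [].
rewrite ltNge; apply/negP => hge.
have : e ^+ 2 <= `|U_l S F l x0 - U_l S F l t| ^+ 2.
  by rewrite lerXn2r // ?nnegrE // ltW.
lra.
Qed.

Lemma U_cont : {within S, continuous (U_l S F l)}.
Proof. apply/subspace_continuousP => x0 Sx0; exact: U_cvg. Qed.

Lemma u_cont : {within S, continuous (u_l S F l)}.
Proof.
apply/subspace_continuousP => x0 Sx0.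
rewrite /from_subspace (u_eq Sx0).
have hS : \forall t \near within S (nbhs x0), S t by exact: near_withinT.
have hg : (fun t => phi F l t (U_l S F l t)) @ within S (nbhs x0) --> phi F l x0 (U_l S F l x0).
  apply: (@phi_cvg _ _ _ (fun t => t) (U_l S F l)).
  - exact: cvg_within.
  - exact: U_cvg.
  - move=> i; apply: cvg_F_comp => //; exact: cvg_within.
  - move=> i; apply: cvg_F_comp; [by case: (U_max Sx0) | exact: U_cvg |].
    by apply: filterS hS => t St; case: (U_max St).
apply: cvg_trans hg.
apply: near_eq_cvg.
by apply: filterS hS => t St /=; rewrite u_eq.
Qed.

End Main.

Theorem theorem3p4 (R : realType) (n m : nat) (S : set 'rV[R]_n)
  (F : 'I_m.+1 -> 'rV[R]_n -> R) (l : R) :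
  S !=set0 -> closed S -> convex_set (S : set (convex_lmodType 'rV[R]_n)) ->
  (forall i, {within S, continuous (F i)}) ->
  (forall i, convex_function (S : set (convex_lmodType 'rV[R]_n)) (F i)) ->
  0 < l ->
  (forall x, S x -> exists! y, is_maximizer S F l x y) /\
  {within S, continuous (u_l S F l)} /\
  {within S, continuous (U_l S F l)}.
Proof.
move=> _ hSc hScv hFc hFcv hl.
split; last split.
- move=> x Sx; have [c hc] := exists_max hl hScv hFcv hSc hFc Sx.
  exists c; split => // c' hc'.
  exact: (maximizer_unique hl hScv hFcv hc hc').
- exact: u_cont hl hScv hFcv hSc hFc.
- exact: U_cont hl hScv hFcv hSc hFc.
Qed.
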